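(* Let $\mathcal V\in\mathcal{RS}(m,\mathbf k,d)$, $n=\sum_ik_i$, and let $\mu=(\mu_1\ge\dots\ge\mu_d>0)$. Then the following are equivalent: (1) there exists $\mathcal W\in\mathcal D(\mathcal V)$ with $\lambda(S_{\mathcal W})=\mu$; (2) there exists an orthogonal projection $P\in M_n(\mathbb C)$ of rank $d$ such that $$\lambda\big(P\,D_n(\mu)\,P\big)=\big(\lambda(S_{\mathcal V}^{-1}),0_{n-d}\big)=\lambda(G_{\mathcal V}^\dagger),$$ where $D_n(\mu)$ is the $n\times n$ diagonal matrix with diagonal $(\mu_1,\dots,\mu_d,0,\dots,0)$ and $G_{\mathcal V}^\dagger$ is the Moore–Penrose pseudo-inverse of $G_{\mathcal V}$.
   Context: Fix integers $m,d\ge1$ and $\mathbf k=(k_1,\dots,k_m)\in\mathbb N^m$, $n=\sum_ik_i$, $\mathcal K=\bigoplus_i\mathbb C^{k_i}\cong\mathbb C^n$. A system is an $m$-tuple $\mathcal V=(V_i)_{i=1}^m$ with $V_i\in L(\mathbb C^d,\mathbb C^{k_i})$. Its analysis operator is $T_{\mathcal V}:\mathbb C^d\to\mathcal K$, $T_{\mathcal V}x=(V_1x,\dots,V_mx)$, so $T_{\mathcal V}^*(y_i)_i=\sum_iV_i^*y_i$; its RS operator is $S_{\mathcal V}=T_{\mathcal V}^*T_{\mathcal V}=\sum_iV_i^*V_i$ and its Gram matrix is $G_{\mathcal V}=T_{\mathcal V}T_{\mathcal V}^*\in M_n(\mathbb C)$. $\mathcal V$ is a reconstruction system (RS) if $S_{\mathcal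 V}$ is invertible; $\mathcal{RS}(m,\mathbf k,d)$ is the set of RS's. $\mathcal W\in\mathcal{RS}(m,\mathbf k,d)$ is a dual of $\mathcal V$ if $T_{\mathcal W}^*T_{\mathcal V}=I_d$, i.e. $\sum_iW_i^*V_i=I_d$; $\mathcal D(\mathcal V)$ is the set of duals of $\mathcal V$. For a positive semidefinite matrix $S$, $\lambda(S)$ denotes its vector of eigenvalues counted with multiplicity in decreasing order, and $\lambda_j(S)$ its $j$-th entry; $0_{r}$ is the zero vector of length $r$. *)

(* Defs.v *)
From HB Require Import structures.
From mathcomp Require Import all_boot all_order all_algebra.
Set Implicit Arguments. Unset Strict Implicit. Unset Printing Implicit Defensive.
Import Order.TTheory GRing.Theory Num.Theory.
Local Open Scope ring_scope.

Definition ctmx (C : numClosedFieldType) p q (A : 'M[C]_(p, q)) : 'M[C]_(q, p) :=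
  (map_mx Num.conj A)^T.

Definition system (C : numClosedFieldType) (m : nat) (k : 'I_m -> nat) (d : nat) :=
  forall i : 'I_m, 'M[C]_(k i, d).

Definition anaop (C : numClosedFieldType) m k d (V : @system C m k d) : 'M[C]_(\sum_i k i, d) :=
  \mxcol_(i < m) V i.

(* RS operator S_V = T_V^* T_V = \sum_i V_i^* V_i *)
Definition rsop (C : numClosedFieldType) m k d (V : @system C m k d) : 'M[C]_d :=
  ctmx (anaop V) *m anaop V.

Definition gram (C : numClosedFieldType) m k d (V : @system C m k d) : 'M[C]_(\sum_i k i) :=
  anaop V *m ctmx (anaop V).

Definition is_RS (C : numClosedFieldType) m k d (V : @system C m k d) : Prop := rsop V \in unitmx.

Definition is_dual (C : numClosedFieldType) m k d (V W : @system C m k d) : Prop :=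
  is_RS W /\ ctmx (anaop W) *m anaop V = 1%:M.

(* l is the vector of eigenvalues of S counted with multiplicity, in
   decreasing order:  l real, sorted decreasingly, and the characteristic
   polynomial of S is \prod_(x <- l) (X - x). *)
Definition is_eigvec (C : numClosedFieldType) n (S : 'M[C]_n) (l : seq C) : Prop :=
  [/\ size l = n, all (fun x => x \is Num.real) l, sorted (>=%R) l &
      char_poly S = \prod_(x <- l) ('X - x%:P)].

Definition is_MPinv (C : numClosedFieldType) p q (A : 'M[C]_(p, q)) (X : 'M[C]_(q, p)) : Prop :=
  [/\ A *m X *m A = A, X *m A *m X = X,
      ctmx (A *m X) = A *m X & ctmx (X *m A) = X *m A].

Definition is_orth_proj_rank (C : numClosedFieldType) n (P : 'M[C]_n) (r : nat) : Prop :=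
  [/\ P *m P = P, ctmx P = P & \rank P = r].

Definition Dn (C : numClosedFieldType) n (mu : seq C) : 'M[C]_n := diag_mx (\row_(j < n) nth 0 mu j).

(* Main.v *)
Require Import Defs.
From HB Require Import structures.
From mathcomp Require Import all_boot all_order all_algebra all_fingroup.
Set Implicit Arguments. Unset Strict Implicit. Unset Printing Implicit Defensive.
Import Order.TTheory GRing.Theory Num.Theory Num.Def.
Local Open Scope ring_scope.

Section Sylv.
Variable R : fieldType.

Lemma char_poly_sylv m n (A : 'M[R]_(m, n)) (B : 'M[R]_(n, m)) :
  'X^n * char_poly (A *m B) = 'X^m * char_poly (B *m A).
Proof.
pose x : {poly R} := 'X.
pose A' := map_mx polyC A. pose B' := map_mx polyC B.
pose M := block_mx (x%:M : 'M_m) A' B' (1%:M : 'M_n).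
have e1 : block_mx (1%:M : 'M_m) (- A') 0 (x%:M : 'M_n) *m M
   = block_mx (char_poly_mx (A *m B)) 0 (x *: B') (x%:M).
  rewrite mulmx_block !mul1mx !mul0mx !add0r /char_poly_mx map_mxM.
  by rewrite mulmx1 subrr mulNmx mul_scalar_mx mulmx1.
have e2 : block_mx (1%:M : 'M_m) 0 (- B') (x%:M : 'M_n) *m M
   = block_mx (x%:M) A' 0 (char_poly_mx (B *m A)).
  rewrite mulmx_block !mul1mx !mul0mx ?add0r ?addr0 /char_poly_mx map_mxM.
  rewrite mulNmx mul_mx_scalar mul_scalar_mx addrC subrr mulmx1 addrC.
  by rewrite ?mulNmx.
have d1 := congr1 determinant e1; have d2 := congr1 determinant e2.
rewrite det_mulmx det_ublock det1 mul1r det_lblock det_scalar in d1.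
rewrite det_mulmx det_lblock det1 mul1r det_ublock !det_scalar in d2.
have xn0 : x ^+ n != 0 by rewrite expf_neq0 // polyX_eq0.
have dM : \det M = char_poly (A *m B).
  by apply: (mulIf xn0); rewrite mulrC d1 mulrC.
by rewrite -dM d2.
Qed.
End Sylv.

Section CT.
Variable C : numClosedFieldType.

Lemma ctmxE p q (A : 'M[C]_(p, q)) : ctmx A = map_mx conjC (A^T).
Proof. by rewrite /ctmx map_trmx. Qed.

Lemma ctmxK p q (A : 'M[C]_(p, q)) : ctmx (ctmx A) = A.
Proof. by rewrite /ctmx -map_trmx trmxK -map_mx_comp map_mx_id // => x /=; rewrite conjCK. Qed.

Lemma ctmxM p q r (A : 'M[C]_(p, q)) (B : 'M[C]_(q, r)) :
  ctmx (A *m B) = ctmx B *m ctmx A.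
Proof. by rewrite /ctmx map_mxM trmx_mul. Qed.

Lemma ctmx1 p : ctmx (1%:M : 'M[C]_p) = 1%:M.
Proof. by rewrite /ctmx map_mx1 trmx1. Qed.

Lemma ctmx0 p q : ctmx (0 : 'M[C]_(p, q)) = 0.
Proof. by rewrite /ctmx map_mx0 trmx0. Qed.

Lemma ctmxD p q (A B : 'M[C]_(p, q)) : ctmx (A + B) = ctmx A + ctmx B.
Proof. by rewrite /ctmx map_mxD linearD. Qed.

Lemma ctmxN p q (A : 'M[C]_(p, q)) : ctmx (- A) = - ctmx A.
Proof. by rewrite /ctmx map_mxN linearN. Qed.

Lemma ctmxB p q (A B : 'M[C]_(p, q)) : ctmx (A - B) = ctmx A - ctmx B.
Proof. by rewrite ctmxD ctmxN. Qed.

Lemma ctmx_inv p (A : 'M[C]_p) : ctmx (invmx A) = invmx (ctmx A).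
Proof. by rewrite /ctmx map_invmx trmx_inv. Qed.

Lemma ctmx_unit p (A : 'M[C]_p) : (ctmx A \in unitmx) = (A \in unitmx).
Proof. by rewrite /ctmx unitmx_tr map_unitmx. Qed.

Lemma ctmx_diag p (s : 'rV[C]_p) :
  (forall i, s 0 i \is Num.real) -> ctmx (diag_mx s) = diag_mx s.
Proof.
move=> hs; apply/matrixP => i j; rewrite !mxE.
case: (eqVneq i j) => [->|hij]; first by rewrite !mulr1n; apply/CrealP.
by rewrite !mulr0n conjC0.
Qed.

Lemma mulmx1C' p (A B : 'M[C]_p) : A *m B = 1%:M -> B *m A = 1%:M.
Proof. exact: mulmx1C. Qed.

Lemma char_poly_sq p (A B : 'M[C]_p) : char_poly (A *m B) = char_poly (B *m A).
Proof.
have xn0 : ('X^p : {poly C}) != 0 by rewrite expf_neq0 // polyX_eq0.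
by apply: (mulfI xn0); rewrite char_poly_sylv.
Qed.

Lemma char_poly_unitary p (U A : 'M[C]_p) : U *m ctmx U = 1%:M ->
  char_poly (U *m A *m ctmx U) = char_poly A /\
  char_poly (ctmx U *m A *m U) = char_poly A.
Proof.
move=> hU; have hU' := mulmx1C hU; split.
  by rewrite -mulmxA char_poly_sq -mulmxA hU' mulmx1.
by rewrite -mulmxA char_poly_sq -mulmxA hU mulmx1.
Qed.

Lemma char_poly_diag p (s : 'rV[C]_p) :
  char_poly (diag_mx s) = \prod_(i < p) ('X - (s 0 i)%:P).
Proof.
rewrite char_poly_trig ?diag_mx_is_trig //.
by apply: eq_bigr => i _; rewrite mxE eqxx mulr1n.
Qed.


Lemma herm_spec p (H : 'M[C]_p) : ctmx H = H -> exists U : 'M_p, exists s : 'rV_p,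
  [/\ U *m ctmx U = 1%:M, forall i, s 0 i \is Num.real & H = ctmx U *m diag_mx s *m U].
Proof.
move=> hH.
have hn : H \is normalmx by apply/normalmxP; rewrite -ctmxE hH.
have hU := spectral_unitarymx H.
have eH := orthomx_spectralP hn.
rewrite invmx_unitary // -ctmxE in eH.
set U := spectralmx H in hU eH; set s := spectral_diag H in eH.
have hU1 : U *m ctmx U = 1%:M by rewrite ctmxE; apply/unitarymxP.
have hU2 := mulmx1C hU1.
exists U, s; split => //.
have eD : ctmx (diag_mx s) = diag_mx s.
  have e1 : diag_mx s = U *m H *m ctmx U.
    by rewrite eH !mulmxA hU1 mul1mx -mulmxA hU1 mulmx1.
  by rewrite e1 !ctmxM ctmxK hH mulmxA.
move=> i; apply/CrealP.
by have := congr1 (fun M : 'M_p => M i i) eD; rewrite !mxE eqxx !mulr1n.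
Qed.


Lemma diag_perm_eq p (s1 s2 : 'rV[C]_p) :
  \prod_(i < p) ('X - (s1 0 i)%:P) = \prod_(i < p) ('X - (s2 0 i)%:P) ->
  exists Q : 'M[C]_p, Q *m ctmx Q = 1%:M /\ diag_mx s1 = Q *m diag_mx s2 *m ctmx Q.
Proof.
move=> e.
pose t1 := [tuple s1 0 i | i < p]; pose t2 := [tuple s2 0 i | i < p].
have e' : \prod_(x <- t1) ('X - x%:P) = \prod_(x <- t2) ('X - x%:P).
  by rewrite !big_tuple; under eq_bigr do rewrite tnth_mktuple;
     under [RHS]eq_bigr do rewrite tnth_mktuple.
have /perm.tuple_permP [sg hsg] := prod_XsubC_eq e'.
have hs : forall i, s1 0 i = s2 0 (sg i).
  move=> i; have := congr1 (fun t => tnth t i) (val_inj hsg).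
  by rewrite /= !tnth_mktuple.
have cQ : ctmx (perm_mx sg : 'M[C]_p) = perm_mx sg^-1.
  by rewrite /ctmx (map_perm_mx conjC) tr_perm_mx.
exists (perm_mx sg); rewrite cQ; split.
  by rewrite -perm_mxM mulgV perm_mx1.
rewrite -row_permE -col_permE; apply/matrixP => i j.
rewrite !mxE hs (inj_eq perm_inj).
by [].
Qed.

Lemma herm_unitary_eq p (H1 H2 : 'M[C]_p) : ctmx H1 = H1 -> ctmx H2 = H2 ->
  char_poly H1 = char_poly H2 ->
  exists Y : 'M[C]_p, Y *m ctmx Y = 1%:M /\ H1 = ctmx Y *m H2 *m Y.
Proof.
move=> h1 h2 e.
have [U1 [s1 [u1 _ e1]]] := herm_spec h1.
have [U2 [s2 [u2 _ e2]]] := herm_spec h2.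
have [_ c1] := char_poly_unitary (diag_mx s1) u1.
have [_ c2] := char_poly_unitary (diag_mx s2) u2.
rewrite -e1 char_poly_diag in c1; rewrite -e2 char_poly_diag in c2.
have [Q [uQ eQ]] := diag_perm_eq (etrans (esym c1) (etrans e c2)).
have u1' := mulmx1C u1; have u2' := mulmx1C u2; have uQ' := mulmx1C uQ.
exists (ctmx U2 *m ctmx Q *m U1); split.
  rewrite !ctmxM !ctmxK !mulmxA.
  rewrite -[ctmx U2 *m ctmx Q *m U1 *m ctmx U1]mulmxA u1 mulmx1.
  by rewrite -[ctmx U2 *m ctmx Q *m Q]mulmxA uQ' mulmx1 u2'.
have eD2 : diag_mx s2 = U2 *m H2 *m ctmx U2.
  by rewrite e2 !mulmxA u2 mul1mx -mulmxA u2 mulmx1.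
rewrite e1 eQ eD2 !ctmxM !ctmxK !mulmxA.
by [].
Qed.


Lemma char_poly1 p : char_poly (1%:M : 'M[C]_p) = ('X - 1) ^+ p.
Proof.
rewrite char_poly_trig ?scalar_mx_is_trig //.
under eq_bigr do rewrite mxE eqxx mulr1n.
by rewrite prodr_const card_ord.
Qed.

Lemma UL_id p r (L : 'M[C]_(p, r)) (U : 'M[C]_(r, p)) Z B :
  Z *m L = 1%:M -> U *m B = 1%:M -> (L *m U) *m (L *m U) = L *m U -> U *m L = 1%:M.
Proof.
move=> hZ hB hQ; have := congr1 (fun M => Z *m M *m B) hQ => /=.
rewrite !mulmxA hZ mul1mx -!mulmxA hB mulmx1.
by move=> <-.
Qed.

Lemma proj_char_poly p (Q : 'M[C]_p) : Q *m Q = Q ->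
  'X^(\rank Q) * char_poly Q = 'X^p * ('X - 1) ^+ (\rank Q).
Proof.
move=> hQ.
have [Z hZ] := row_fullP (col_base_full Q).
have [B hB] := row_freeP (row_base_free Q).
have eUL : row_base Q *m col_base Q = 1%:M.
  by apply: (UL_id hZ hB); rewrite mulmx_base hQ.
rewrite -{2}(mulmx_base Q) char_poly_sylv eUL char_poly1.
by [].
Qed.

Lemma rank_conj p (Y A : 'M[C]_p) : Y *m ctmx Y = 1%:M ->
  \rank (Y *m A *m ctmx Y) = \rank A.
Proof.
move=> hY; have hY' := mulmx1C hY.
apply/eqP; rewrite eqn_leq; apply/andP; split.
  by rewrite (leq_trans (mxrankM_maxl _ _)) ?mxrankM_maxr.
have eA : A = ctmx Y *m (Y *m A *m ctmx Y) *m Y.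
  by rewrite !mulmxA hY' mul1mx -mulmxA hY' mulmx1.
by rewrite {1}eA (leq_trans (mxrankM_maxl _ _)) ?mxrankM_maxr.
Qed.


Lemma MPinv_uniq p q (A : 'M[C]_(p, q)) (X Y : 'M[C]_(q, p)) :
  is_MPinv A X -> is_MPinv A Y -> X = Y.
Proof.
move=> [hX1 hX2 hX3 hX4] [hY1 hY2 hY3 hY4].
have eX : X = X *m A *m Y.
  have -> : X *m A *m Y = X *m (A *m X *m (A *m Y)).
    by rewrite !mulmxA hX2.
  rewrite -hX3 -hY3 -ctmxM !mulmxA hY1 hX3 mulmxA hX2 //.
have eY : Y = X *m A *m Y.
  have -> : X *m A *m Y = X *m A *m (Y *m A) *m Y.
    by rewrite -(mulmxA (X *m A)) hY2.
  have e2 : Y *m A *m (X *m A) = Y *m A.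
    by rewrite mulmxA -(mulmxA Y A X) -mulmxA hX1.
  by rewrite -hX4 -hY4 -ctmxM e2 hY4 hY2.
by rewrite {1}eX -eY.
Qed.

Lemma eig_ge0 p q (M : 'M[C]_(p, q)) x :
  root (char_poly (ctmx M *m M)) x -> 0 <= x.
Proof.
rewrite -eigenvalue_root_char => /eigenvalueP [v hv v0].
have e : (v *m ctmx M) *m ctmx (v *m ctmx M) = x *: (v *m ctmx v).
  by rewrite ctmxM ctmxK !mulmxA -(mulmxA v) hv scalemxAl.
have ex : dotmx (v *m ctmx M) (v *m ctmx M) = x * dotmx v v.
  by rewrite !dotmxE -!ctmxE e mxE.
have hv0 : 0 < dotmx v v by apply: dotmx_is_dotmx.
have : 0 <= x * dotmx v v by rewrite -ex dnorm_ge0.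
by rewrite pmulr_lge0.
Qed.


Lemma exists_eig p (H : 'M[C]_p) : ctmx H = H -> exists l, is_eigvec H l.
Proof.
move=> hH; have [U [s [hU hs eH]]] := herm_spec hH.
have [_ c1] := char_poly_unitary (diag_mx s) hU.
rewrite -eH char_poly_diag in c1.
pose l0 := [seq s 0 i | i <- enum 'I_p].
have hl0 : all (fun x => x \is Num.real) l0.
  by apply/allP => x /mapP [i _ ->].
exists (sort (fun x y => y <= x) l0); split.
- by rewrite size_sort size_map size_enum_ord.
- by rewrite all_sort.
- apply: (sort_sorted_in (P := fun x => x \is Num.real)) => //.
  by move=> x y hx hy; rewrite orbC; apply: real_leVge.
- rewrite c1 (perm_big _ (permEl (perm_sort _ _))) big_map big_enum /=.
  by apply: eq_bigl => i; rewrite inE.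
Qed.

End CT.

Lemma sorted_cat_nseq (R : numDomainType) (l : seq R) k :
  sorted (>=%R) l -> all (fun x => 0 <= x) l -> sorted (>=%R) (l ++ nseq k 0).
Proof.
case: l => [|x l] /=.
  by move=> _ _; elim: k => [|k IH] //=; case: k IH => //= k ->; rewrite lexx.
move=> hs /andP [hx hl].
rewrite cat_path hs /=.
have hlast : 0 <= last x l.
  have : last x l \in x :: l by apply: mem_last.
  by rewrite inE => /orP [/eqP -> //| /(allP hl)].
elim: k => [|k IH] //=.
rewrite hlast /=.
by elim: k {IH} => [|k IH] //=; rewrite lexx.
Qed.

Section TT.
Variables (C : numClosedFieldType) (n d : nat) (T : 'M[C]_(n, d)).
Hypothesis hS : (ctmx T *m T) \in unitmx.

Local Notation S := (ctmx T *m T).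
Local Notation Si := (invmx (ctmx T *m T)).
Fact pv_key : unit. Proof. by []. Qed.
Definition pv := locked_with pv_key (T *m invmx (ctmx T *m T) *m ctmx T).
Lemma pvE : pv = T *m invmx (ctmx T *m T) *m ctmx T.
Proof. exact: unlock. Qed.
Local Notation PV := pv.

Lemma cS : ctmx S = S. Proof. by rewrite ctmxM ctmxK. Qed.
Lemma cSi : ctmx Si = Si. Proof. by rewrite ctmx_inv cS. Qed.
Lemma SiS : Si *m S = 1%:M. Proof. exact: mulVmx. Qed.
Lemma SSi : S *m Si = 1%:M. Proof. exact: mulmxV. Qed.

Lemma PVT : PV *m T = T.
Proof. by rewrite pvE; rewrite -!mulmxA SiS mulmx1. Qed.
Lemma TPV : ctmx T *m PV = ctmx T.
Proof. by rewrite pvE; rewrite !mulmxA SSi mul1mx. Qed.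
Lemma PV2 : PV *m PV = PV.
Proof. by rewrite {2}pvE !mulmxA PVT pvE. Qed.
Lemma cPV : ctmx PV = PV.
Proof. by rewrite pvE; rewrite !ctmxM ctmxK cSi mulmxA. Qed.

Lemma rankT : \rank T = d.
Proof.
apply/eqP; rewrite eqn_leq rank_leq_col /=.
by rewrite -{1}(mxrank_unit hS) mxrankM_maxr.
Qed.

Lemma d_le_n : (d <= n)%N.
Proof. by rewrite -rankT rank_leq_row. Qed.

Lemma rankPV : \rank PV = d.
Proof.
apply/eqP; rewrite eqn_leq; apply/andP; split.
  by rewrite pvE -mulmxA (leq_trans (mxrankM_maxl _ _)) // rankT.
by rewrite -{1}rankT -{1}PVT mxrankM_maxl.
Qed.

Lemma Si_gram : ctmx (T *m Si) *m (T *m Si) = Si.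
Proof. by rewrite ctmxM cSi -mulmxA (mulmxA (ctmx T)) SSi mulmx1. Qed.

Lemma chi_X0 : 'X^d * char_poly (T *m (Si *m Si *m ctmx T)) = 'X^n * char_poly Si.
Proof. by rewrite char_poly_sylv -!mulmxA SiS mulmx1. Qed.

Lemma X0_MP : is_MPinv (T *m ctmx T) (T *m (Si *m Si *m ctmx T)).
Proof.
have e1 : T *m ctmx T *m (T *m (Si *m Si *m ctmx T)) = PV.
  by rewrite pvE !mulmxA -(mulmxA T (ctmx T) T) -(mulmxA T S Si) SSi mulmx1.
have e2 : T *m (Si *m Si *m ctmx T) *m (T *m ctmx T) = PV.
  by rewrite pvE !mulmxA -(mulmxA (T *m Si *m Si) (ctmx T) T) -(mulmxA (T *m Si) Si S) SiS mulmx1.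
split.
- by rewrite e1 mulmxA PVT.
- by rewrite e2 mulmxA PVT.
- by rewrite e1 cPV.
- by rewrite e2 cPV.
Qed.

Lemma prod_nseq0 k : \prod_(x <- nseq k (0 : C)) ('X - x%:P) = 'X^k.
Proof.
elim: k => [|k IH]; first by rewrite big_nil expr0.
by rewrite /= big_cons IH subr0 exprS.
Qed.

Lemma eig_ext l : is_eigvec Si l -> forall N : 'M[C]_n,
  'X^d * char_poly N = 'X^n * char_poly Si -> is_eigvec N (l ++ nseq (n - d) 0).
Proof.
move=> [hsz hreal hsort hchi] N hN; split.
- by rewrite size_cat size_nseq hsz subnKC // d_le_n.
- by rewrite all_cat hreal /=; apply/allP => x /nseqP [-> _]; rewrite real0.
- apply: sorted_cat_nseq => //; apply/allP => x hx.
  have : root (char_poly (ctmx (T *m Si) *m (T *m Si))) x.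
    by rewrite Si_gram hchi root_prod_XsubC.
  exact: eig_ge0.
- have xd0 : ('X^d : {poly C}) != 0 by rewrite expf_neq0 // polyX_eq0.
  apply: (mulfI xd0).
  by rewrite hN big_cat /= prod_nseq0 hchi [_ * 'X^(n - d)]mulrC mulrA -exprD subnKC ?d_le_n.
Qed.


Lemma factor_S : exists Cm : 'M[C]_d, Cm \in unitmx /\ Si = Cm *m ctmx Cm.
Proof.
pose J := schmidt (ctmx T).
have hJ : J *m ctmx J = 1%:M.
  by rewrite ctmxE; apply/unitarymxP; apply: schmidt_unitarymx; apply: d_le_n.
pose A := ctmx T *m ctmx J.
have eT : ctmx T = A *m J.
  have h := mulmxKpV (schmidt_sub (ctmx T)); rewrite -/J in h.
  have e2 : ctmx T *m pinvmx J *m J *m ctmx J = ctmx T *m pinvmx J.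
    by rewrite -mulmxA hJ mulmx1.
  rewrite h in e2.
  by rewrite /A e2 h.
have eS : S = A *m ctmx A.
  by rewrite {1}eT -{1}[T]ctmxK eT ctmxM !mulmxA -(mulmxA A J (ctmx J)) hJ mulmx1.
have hA : A \in unitmx by move: hS; rewrite eS unitmx_mul => /andP [].
have hA' : ctmx A \in unitmx by rewrite ctmx_unit.
exists (ctmx (invmx A)); split; first by rewrite ctmx_unit unitmx_inv.
rewrite ctmxK ctmx_inv.
have e1 : invmx (ctmx A) *m invmx A *m S = 1%:M.
  by rewrite eS mulmxA mulmxKV // mulVmx.
by rewrite -[LHS]mul1mx -e1 mulmxK.
Qed.

Lemma TQ0 : ctmx T *m (1%:M - PV) = 0.
Proof. by rewrite mulmxBr mulmx1 TPV subrr. Qed.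
Lemma QT0 : (1%:M - PV) *m T = 0.
Proof. by rewrite mulmxBl mul1mx PVT subrr. Qed.
Lemma QQ : (1%:M - PV) *m (1%:M - PV) = 1%:M - PV.
Proof. by rewrite mulmxBl mul1mx mulmxBr mulmx1 PV2 subrr subr0. Qed.
Lemma cQ : ctmx (1%:M - PV) = 1%:M - PV.
Proof. by rewrite ctmxB ctmx1 cPV. Qed.

Lemma unitary_fix (K0 : 'M[C]_d) : ctmx K0 = K0 ->
  char_poly (Si *m K0) = char_poly Si ->
  exists V2 : 'M[C]_n, exists G : 'M[C]_d,
    [/\ V2 *m ctmx V2 = 1%:M, V2 *m T = T *m G & ctmx G *m K0 *m G = 1%:M].
Proof.
move=> hK hchi.
have [Cm [hC eSi]] := factor_S.
have hCC : ctmx (ctmx Cm *m K0 *m Cm) = ctmx Cm *m K0 *m Cm.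
  by rewrite !ctmxM ctmxK hK mulmxA.
have hCC2 : ctmx (ctmx Cm *m Cm) = ctmx Cm *m Cm by rewrite ctmxM ctmxK.
have e1 : char_poly (ctmx Cm *m K0 *m Cm) = char_poly (ctmx Cm *m Cm).
  rewrite -mulmxA char_poly_sq -mulmxA -eSi char_poly_sq hchi eSi char_poly_sq.
  by [].
have [Z [hZ eZ]] := herm_unitary_eq hCC hCC2 e1.
have hZ' := mulmx1C hZ.
have hCi : Cm *m invmx Cm = 1%:M by apply: mulmxV.
have hCi' : invmx Cm *m Cm = 1%:M by apply: mulVmx.
have hcCi : ctmx (invmx Cm) *m ctmx Cm = 1%:M by rewrite -ctmxM hCi ctmx1.
have hcCi' : ctmx Cm *m ctmx (invmx Cm) = 1%:M by rewrite -ctmxM hCi' ctmx1.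
pose G := Cm *m ctmx Z *m invmx Cm.
have cG : ctmx G = ctmx (invmx Cm) *m Z *m ctmx Cm by rewrite /G !ctmxM ctmxK mulmxA.
have hG1 : ctmx G *m K0 *m G = 1%:M.
  have -> : ctmx G *m K0 *m G = ctmx (invmx Cm) *m Z *m (ctmx Cm *m K0 *m Cm)
      *m ctmx Z *m invmx Cm by rewrite cG /G !mulmxA.
  rewrite eZ.
  have -> : ctmx (invmx Cm) *m Z *m (ctmx Z *m (ctmx Cm *m Cm) *m Z) *m ctmx Z *m invmx Cm
     = ctmx (invmx Cm) *m (Z *m ctmx Z) *m ctmx Cm *m Cm *m (Z *m ctmx Z) *m invmx Cm
     by rewrite !mulmxA.
  by rewrite hZ !mulmx1 hcCi mul1mx hCi.
have hGS : G *m Si *m ctmx G = Si.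
  rewrite cG {1}eSi.
  have -> : G *m (Cm *m ctmx Cm) *m (ctmx (invmx Cm) *m Z *m ctmx Cm)
     = Cm *m ctmx Z *m (invmx Cm *m Cm) *m (ctmx Cm *m ctmx (invmx Cm)) *m Z *m ctmx Cm
     by rewrite /G !mulmxA.
  by rewrite hCi' hcCi' !mulmx1 -(mulmxA Cm) hZ' mulmx1 eSi.
pose V2 := T *m G *m Si *m ctmx T + (1%:M - PV).
exists V2, G; split.
- have cV2 : ctmx V2 = T *m Si *m ctmx G *m ctmx T + (1%:M - PV).
    by rewrite /V2 ctmxD cQ !ctmxM ctmxK cSi !mulmxA.
  rewrite cV2 /V2 mulmxDl !(mulmxDr _ _ (1%:M - PV)) QQ.
  have -> : T *m G *m Si *m ctmx T *m (1%:M - PV) = 0.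
    by rewrite -mulmxA TQ0 mulmx0.
  have -> : (1%:M - PV) *m (T *m Si *m ctmx G *m ctmx T) = 0.
    by rewrite !mulmxA QT0 !mul0mx.
  have -> : T *m G *m Si *m ctmx T *m (T *m Si *m ctmx G *m ctmx T) = PV.
    have -> : T *m G *m Si *m ctmx T *m (T *m Si *m ctmx G *m ctmx T)
       = T *m G *m (Si *m (ctmx T *m T)) *m Si *m ctmx G *m ctmx T by rewrite !mulmxA.
    rewrite SiS mulmx1 -(mulmxA T G Si) -(mulmxA T) hGS.
    by rewrite pvE.
  by rewrite addr0 add0r addrC subrK.
- by rewrite /V2 mulmxDl QT0 addr0 -(mulmxA (T *m G *m Si)) -(mulmxA (T *m G)) SiS mulmx1.
- exact: hG1.
Qed.

Variable mu : seq C.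
Hypothesis hmu_size : size mu = d.
Hypothesis hmu_pos : all (fun x => 0 < x) mu.

Lemma nth_mu_real i : nth 0 mu i \is Num.real.
Proof.
case: (ltnP i (size mu)) => h; last by rewrite nth_default ?real0.
by apply: gtr0_real; apply: (allP hmu_pos); apply: mem_nth.
Qed.

Lemma cDn : ctmx (Dn n mu) = Dn n mu.
Proof. by apply: ctmx_diag => i; rewrite mxE nth_mu_real. Qed.

Lemma chiDn : char_poly (Dn n mu) = \prod_(x <- mu) ('X - x%:P) * 'X^(n - d).
Proof.
rewrite char_poly_diag -prod_nseq0 -big_cat (big_nth 0) size_cat size_nseq hmu_size.
rewrite subnKC ?d_le_n // big_mkord; apply: eq_bigr => i _.
rewrite mxE nth_cat hmu_size; case: ifP => // hi.
by rewrite nth_nseq; case: ifP => //; rewrite nth_default // hmu_size leqNgt hi.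
Qed.

Lemma dirA (R : 'M[C]_(n, d)) : ctmx R *m T = 1%:M ->
  char_poly (ctmx R *m R) = \prod_(x <- mu) ('X - x%:P) ->
  exists P : 'M[C]_n, is_orth_proj_rank P d /\
   forall l, is_eigvec Si l ->
     is_eigvec (P *m Dn n mu *m P) (l ++ nseq (n - d) 0) /\
     forall X, is_MPinv (T *m ctmx T) X -> is_eigvec X (l ++ nseq (n - d) 0).
Proof.
move=> hR hchi.
have hR' : ctmx T *m R = 1%:M by rewrite -[R]ctmxK -ctmxM hR ctmx1.
have xd0 : ('X^d : {poly C}) != 0 by rewrite expf_neq0 // polyX_eq0.
have eRD : char_poly (R *m ctmx R) = char_poly (Dn n mu).
  apply: (mulfI xd0); rewrite char_poly_sylv hchi chiDn mulrCA -exprD subnKC ?d_le_n //.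
  by rewrite mulrC.
have cRR : ctmx (R *m ctmx R) = R *m ctmx R by rewrite ctmxM ctmxK.
have [Y [hY eY]] := herm_unitary_eq cRR cDn eRD.
have hY' := mulmx1C hY.
exists (Y *m PV *m ctmx Y); split.
  split.
  - by rewrite !mulmxA -(mulmxA (Y *m PV)) hY' mulmx1 -(mulmxA Y) PV2.
  - by rewrite !ctmxM ctmxK cPV !mulmxA.
  - by rewrite rank_conj // rankPV.
move=> l hl.
have ePR : PV *m R = T *m Si by rewrite pvE -mulmxA hR' mulmx1.
have eP : Y *m PV *m ctmx Y *m Dn n mu *m (Y *m PV *m ctmx Y)
    = Y *m (T *m (Si *m Si *m ctmx T)) *m ctmx Y.
  have -> : Y *m PV *m ctmx Y *m Dn n mu *m (Y *m PV *m ctmx Y)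
      = Y *m (PV *m (ctmx Y *m Dn n mu *m Y) *m PV) *m ctmx Y.
    by rewrite !mulmxA.
  rewrite -eY (mulmxA PV R) ePR -(mulmxA (T *m Si) (ctmx R) PV) -cPV -ctmxM ePR ctmxM cSi.
  by rewrite !mulmxA.
split.
  apply: (eig_ext hl); rewrite eP.
  by have [-> _] := char_poly_unitary (T *m (Si *m Si *m ctmx T)) hY; apply: chi_X0.
move=> X hX; rewrite (MPinv_uniq hX X0_MP).
exact: (eig_ext hl chi_X0).
Qed.


Lemma unit_of_chi (A : 'M[C]_d) :
  char_poly A = \prod_(x <- mu) ('X - x%:P) -> A \in unitmx.
Proof.
move=> hA; rewrite unitmxE unitfE; apply/negP => /eqP h0.
have : root (char_poly A) 0 by rewrite /root horner_coef0 char_poly_det h0 mulr0.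
rewrite hA root_prod_XsubC => /(allP hmu_pos).
by rewrite ltxx.
Qed.

Lemma build_R (Y : 'M[C]_n) : Y *m ctmx Y = 1%:M ->
  ctmx T *m (ctmx Y *m Dn n mu *m Y) *m T = 1%:M ->
  exists R : 'M[C]_(n, d), [/\ ctmx R *m T = 1%:M,
     char_poly (ctmx R *m R) = \prod_(x <- mu) ('X - x%:P) & (ctmx R *m R) \in unitmx].
Proof.
move=> hY hH.
pose Dsq : 'M[C]_n := diag_mx (\row_(j < n) sqrtC (nth 0 mu j)).
pose E : 'M[C]_(n, d) := pid_mx d.
have nth_ge0 : forall j, 0 <= nth 0 mu j.
  move=> j; case: (ltnP j (size mu)) => h; last by rewrite nth_default.
  by apply: ltW; apply: (allP hmu_pos); apply: mem_nth.
have cE : ctmx E = pid_mx d by rewrite /ctmx /E (map_pid_mx conjC) tr_pid_mx.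
have EE : E *m ctmx E = pid_mx d by rewrite cE /E pid_mx_id.
have cDsq : ctmx Dsq = Dsq.
  by apply: ctmx_diag => i; rewrite mxE sqrtC_real.
have hDD : Dsq *m pid_mx d *m Dsq = Dn n mu.
  rewrite /Dsq /Dn mul_diag_mx mul_mx_diag; apply/matrixP => i j; rewrite !mxE.
  case: (eqVneq i j) => [<-|hij]; last first.
    have hij2 : (nat_of_ord i == j) = false by apply/negbTE.
    by rewrite hij2 /= mulr0 mul0r mulr0n.
  rewrite eqxx /= mulr1n; case: (ltnP i d) => hi.
    by rewrite mulr1 -expr2 sqrtCK.
  by rewrite mulr0 mul0r nth_default // hmu_size.
pose B := ctmx Y *m Dsq *m E.
have BB : B *m ctmx B = ctmx Y *m Dn n mu *m Y.
  rewrite /B !ctmxM ctmxK cDsq -hDD -EE !mulmxA.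
  by [].
pose U0 := ctmx B *m T.
have hU0' : ctmx U0 *m U0 = 1%:M.
  by rewrite /U0 ctmxM ctmxK mulmxA -(mulmxA (ctmx T)) BB.
have hU0 := mulmx1C hU0'.
exists (B *m U0); split.
- by rewrite ctmxM -mulmxA.
- have -> : ctmx (B *m U0) *m (B *m U0) = ctmx U0 *m (ctmx B *m B) *m U0.
    by rewrite ctmxM !mulmxA.
  have [_ ->] := char_poly_unitary (ctmx B *m B) hU0.
  have xn0 : ('X^n : {poly C}) != 0 by rewrite expf_neq0 // polyX_eq0.
  apply: (mulfI xn0); rewrite char_poly_sylv BB.
  have [_ ->] := char_poly_unitary (Dn n mu) hY.
  rewrite chiDn mulrCA -exprD subnKC ?d_le_n //.
  by rewrite mulrC.
- apply: unit_of_chi.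
  have -> : ctmx (B *m U0) *m (B *m U0) = ctmx U0 *m (ctmx B *m B) *m U0.
    by rewrite ctmxM !mulmxA.
  have [_ ->] := char_poly_unitary (ctmx B *m B) hU0.
  have xn0 : ('X^n : {poly C}) != 0 by rewrite expf_neq0 // polyX_eq0.
  apply: (mulfI xn0); rewrite char_poly_sylv BB.
  have [_ ->] := char_poly_unitary (Dn n mu) hY.
  rewrite chiDn mulrCA -exprD subnKC ?d_le_n //.
  by rewrite mulrC.
Qed.


Lemma dirB (P : 'M[C]_n) : is_orth_proj_rank P d ->
  (forall l, is_eigvec Si l -> is_eigvec (P *m Dn n mu *m P) (l ++ nseq (n - d) 0)) ->
  exists R : 'M[C]_(n, d), [/\ ctmx R *m T = 1%:M,
     char_poly (ctmx R *m R) = \prod_(x <- mu) ('X - x%:P) & (ctmx R *m R) \in unitmx].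
Proof.
move=> [hP2 hPc hPr] hyp.
have [l hl] := exists_eig cSi.
have [_ _ _ hchiP] := hyp l hl.
have [_ _ _ hchiSi] := hl.
have xd0 : ('X^d : {poly C}) != 0 by rewrite expf_neq0 // polyX_eq0.
have xn0 : ('X^n : {poly C}) != 0 by rewrite expf_neq0 // polyX_eq0.
have hPDP : 'X^d * char_poly (P *m Dn n mu *m P) = 'X^n * char_poly Si.
  rewrite hchiP big_cat /= prod_nseq0 hchiSi mulrCA -exprD subnKC ?d_le_n //.
  by rewrite mulrC.
have eX : char_poly PV = char_poly P.
  have h1 := proj_char_poly PV2; have h2 := proj_char_poly hP2.
  rewrite rankPV in h1; rewrite hPr in h2.
  by apply: (mulfI xd0); rewrite h1 h2.
have [Y [hY eY]] := herm_unitary_eq cPV hPc eX.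
have hY' := mulmx1C hY.
pose H := ctmx Y *m Dn n mu *m Y.
have eHd : H = ctmx Y *m Dn n mu *m Y by [].
have cH : ctmx H = H by rewrite /H !ctmxM ctmxK cDn mulmxA.
have eH1 : PV *m H *m PV = ctmx Y *m (P *m Dn n mu *m P) *m Y.
  rewrite eY /H.
  have -> : ctmx Y *m P *m Y *m (ctmx Y *m Dn n mu *m Y) *m (ctmx Y *m P *m Y)
     = ctmx Y *m P *m (Y *m ctmx Y) *m Dn n mu *m (Y *m ctmx Y) *m P *m Y
     by rewrite !mulmxA.
  by rewrite hY !mulmx1 !mulmxA.
clearbody H.
have e3 : PV *m H *m PV = T *m (Si *m ctmx T *m H *m PV).
  by rewrite {1}pvE !mulmxA.
have e4 : Si *m ctmx T *m H *m PV *m T = Si *m (ctmx T *m H *m T).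
  by rewrite -mulmxA PVT !mulmxA.
have hK : char_poly (Si *m (ctmx T *m H *m T)) = char_poly Si.
  apply: (mulfI xn0); rewrite -e4 -char_poly_sylv -e3 eH1.
  by have [_ ->] := char_poly_unitary (P *m Dn n mu *m P) hY.
have cK : ctmx (ctmx T *m H *m T) = ctmx T *m H *m T.
  by rewrite !ctmxM ctmxK cH mulmxA.
have [V2 [G [hV2 hV2T hG]]] := unitary_fix cK hK.
apply: (build_R (Y := Y *m V2)).
  by rewrite ctmxM !mulmxA -(mulmxA Y) hV2 mulmx1 hY.
have -> : ctmx T *m (ctmx (Y *m V2) *m Dn n mu *m (Y *m V2)) *m T
    = ctmx (V2 *m T) *m H *m (V2 *m T) by rewrite eHd !ctmxM !mulmxA.
rewrite hV2T ctmxM.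
have -> : ctmx G *m ctmx T *m H *m (T *m G) = ctmx G *m (ctmx T *m H *m T) *m G
  by rewrite !mulmxA.
exact: hG.
Qed.

End TT.

Theorem theorem5p2 (C : numClosedFieldType) (m : nat) (k : 'I_m -> nat) (d : nat)
    (hm : (0 < m)%N) (hd : (0 < d)%N)
    (V : system C k d) (hV : is_RS V)
    (mu : seq C) (hmu_size : size mu = d) (hmu_sorted : sorted (>=%R) mu)
    (hmu_pos : all (fun x => 0 < x) mu) :
  (exists W : system C k d, is_dual V W /\ is_eigvec (rsop W) mu)
  <->
  (exists P : 'M[C]_(\sum_i k i),
      is_orth_proj_rank P d /\
      forall l : seq C, is_eigvec (invmx (rsop V)) l ->
        is_eigvec (P *m Dn (\sum_i k i) mu *m P) (l ++ nseq ((\sum_i k i) - d) 0)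
        /\ forall X : 'M[C]_(\sum_i k i), is_MPinv (gram V) X ->
             is_eigvec X (l ++ nseq ((\sum_i k i) - d) 0)).
Proof.
have hS : ctmx (anaop V) *m anaop V \in unitmx := hV.
split.
  move=> [W [[_ hdual] [_ _ _ hchiW]]].
  exact: (dirA hS hmu_size hmu_pos hdual hchiW).
move=> [P [hP hyp]].
have [R [hR hchi hunit]] := dirB hS hmu_size hmu_pos hP (fun l hl => (hyp l hl).1).
pose W : system C k d := fun i => submxcol R i.
have eW : anaop W = R by rewrite /anaop /W submxcolK.
exists W; split.
  by split; rewrite /is_RS /rsop eW.
split => //.
- by apply/allP => x hx; apply: gtr0_real; apply: (allP hmu_pos).
- by rewrite /rsop eW.
Qed.
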